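(* Consider the discrete-time system $x(t+1) = A x(t) + C v(t) + w$ for $t=0,1,2,\ldots$, with $A \in \mathbb{R}^{d_x\times d_x}$, $C \in \mathbb{R}^{d_x \times d_v}$, constant $w \in \mathbb{R}^{d_x}$, and disturbance input $v(t) \in \mathcal V = \langle c_{\mathcal V} \mid G_{\mathcal V}\rangle$, where $c_{\mathcal V} \in \mathbb{R}^{d_v}$ and $G_{\mathcal V} \in \mathbb{R}^{d_v \times n_{\mathcal V}}$. Let $\mathcal X = \{ x \in \mathbb{R}^{d_x} \mid \underline x \leq x \leq \overline x\}$ and $T \geq 0$ an integer. Let $G_{\mathcal I} \in \mathbb{R}^{d_x \times n_{\mathcal I}}$, $\alpha \in \mathbb{R}^{d_x}$, $\gamma \in \mathbb{R}^{n_{\mathcal I}}$ with $\gamma\geq 0$, $\Gamma = \mathrm{diag}(\gamma)$, and $\mathcal I = \langle \alpha \mid G_{\mathcal I}\Gamma\rangle$. If for all $t = 0,\ldots,T$ \[ A^t\alpha + \sum_{s=0}^{t-1} A^{t-1-s}(C c_{\mathcal V} + w) - |A^t G_{\mathcal I}|\gamma - \sum_{s=0}^{t-1} |A^{t-1-s} C G_{\mathcal V}|\mathbf{1}_{n_{\mathcal V}} \geq \underline x, \] \[ A^t\alpha + \sum_{s=0}^{t-1} A^{t-1-s}(C c_{\mathcal V} + w) + |A^t G_{\mathcal I}|\gamma + \sum_{s=0}^{t-1} |A^{t-1-s} C G_{\mathcal V}|\mathbf{1}_{n_{\mathcal V}} \leq \overline x, \] then $\mathcal I \subseteq \mathrm{Inv}_{[0,T]}(\mathcal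 X)$, where $\mathrm{Inv}_{[0,T]}(\mathcal X)$ is the set of $x(0) \in \mathcal X$ such that for every disturbance signal with $v(t) \in \mathcal V$ for all $t$, the resulting trajectory satisfies $x(t) \in \mathcal X$ for all $t = 0,\ldots,T$.
   Context: Vector inequalities are elementwise; $|M|$ is the elementwise absolute value; $\mathbf{1}_n$ is the all-ones vector in $\mathbb{R}^n$. The notation $\langle c \mid G\rangle$ denotes the zonotope $\{c + G\lambda : \lambda \in [-1,1]^n\}$. $\mathrm{diag}(\gamma)$ is the diagonal matrix with $\gamma$ on its diagonal. *)

(* Defs.v *)
From mathcomp Require Import all_boot all_order all_algebra.
Set Implicit Arguments. Unset Strict Implicit. Unset Printing Implicit Defensive.
Import Order.TTheory GRing.Theory Num.Theory.
Local Open Scope ring_scope.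

Definition vle (R : realFieldType) (n : nat) (x y : 'cV[R]_n) : Prop :=
  forall i, x i 0 <= y i 0.

Definition mabs (R : realFieldType) (m n : nat) (M : 'M[R]_(m, n)) : 'M[R]_(m, n) :=
  map_mx (fun a => `|a|) M.

Definition ones (R : realFieldType) (n : nat) : 'cV[R]_n := const_mx 1.

Definition zonotope (R : realFieldType) (d k : nat) (c : 'cV[R]_d) (G : 'M[R]_(d, k))
  (x : 'cV[R]_d) : Prop :=
  exists lam : 'cV[R]_k, (forall i, -1 <= lam i 0 <= 1) /\ x = c + G *m lam.

Definition box (R : realFieldType) (d : nat) (xlo xhi x : 'cV[R]_d) : Prop :=
  vle xlo x /\ vle x xhi.

Fixpoint traj (R : realFieldType) (dx dv : nat) (A : 'M[R]_dx) (C : 'M[R]_(dx, dv))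
  (w : 'cV[R]_dx) (x0 : 'cV[R]_dx) (v : nat -> 'cV[R]_dv) (t : nat) : 'cV[R]_dx :=
  match t with
  | 0 => x0
  | t'.+1 => A *m traj A C w x0 v t' + C *m v t' + w
  end.

Definition Inv (R : realFieldType) (dx dv : nat) (A : 'M[R]_dx) (C : 'M[R]_(dx, dv))
  (w : 'cV[R]_dx) (Vset : 'cV[R]_dv -> Prop) (X : 'cV[R]_dx -> Prop) (T : nat)
  (x0 : 'cV[R]_dx) : Prop :=
  X x0 /\
  forall v : nat -> 'cV[R]_dv, (forall t, Vset (v t)) ->
    forall t, (t <= T)%N -> X (traj A C w x0 v t).

(* Main.v *)
Require Import Defs.
From mathcomp Require Import all_boot all_order all_algebra.
From mathcomp Require Import zify ring lra.
From Stdlib Require Import ClassicalEpsilon.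
Import Order.TTheory GRing.Theory Num.Theory.
Local Open Scope ring_scope.

Lemma traj_closed (R : realFieldType) (dx dv : nat) (A : 'M[R]_dx) (C : 'M[R]_(dx, dv))
  (w : 'cV[R]_dx) (x0 : 'cV[R]_dx) (v : nat -> 'cV[R]_dv) (t : nat) :
  traj A C w x0 v t = A ^+ t *m x0 + \sum_(s < t) A ^+ (t.-1 - s) *m (C *m v s + w).
Proof.
have eS n : A *m A ^+ n = A ^+ n.+1 by rewrite exprS mulmxE.
elim: t => [|t IH] /=; first by rewrite expr0 mul1mx big_ord0 addr0.
rewrite IH big_ord_recr /= subnn expr0 mul1mx mulmxDr mulmx_sumr mulmxA.
rewrite eS -!addrA; congr (_ + _).
congr (_ + _); apply: eq_bigr => s _.
have -> : (t - s = (t.-1 - s).+1)%N by have := ltn_ord s; lia.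
by rewrite -eS; apply: mulmxA.
Qed.

Lemma bound_mul (R : realFieldType) (d k : nat) (M : 'M[R]_(d, k)) (u b : 'cV[R]_k) i :
  (forall j, `|u j 0| <= b j 0) -> `|(M *m u) i 0| <= (mabs M *m b) i 0.
Proof.
move=> hb; rewrite !mxE; apply: le_trans (ler_norm_sum _ _ _) _.
apply: ler_sum => j _; rewrite /mabs mxE normrM; apply: ler_wpM2l => //.
Qed.

Lemma bound_sum (R : realFieldType) (d k t : nat) (N : nat -> 'M[R]_(d, k))
  (mu : nat -> 'cV[R]_k) i :
  (forall s j, `|mu s j 0| <= 1) ->
  `|(\sum_(s < t) N s *m mu s) i 0| <= (\sum_(s < t) mabs (N s) *m ones R k) i 0.
Proof.
move=> hm; rewrite !summxE; apply: le_trans (ler_norm_sum _ _ _) _.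
apply: ler_sum => s _; apply: bound_mul => j; rewrite /ones mxE; exact: hm.
Qed.

Lemma final_box (R : realFieldType) (d : nat) (m e f E F lo hi : 'cV[R]_d) :
  (forall i, `|e i 0| <= E i 0) -> (forall i, `|f i 0| <= F i 0) ->
  vle lo (m - E - F) -> vle (m + E + F) hi -> box lo hi (m + e + f).
Proof.
move=> he hf Hl Hh; split => i; [move: (Hl i) | move: (Hh i)];
  move: (he i) (hf i); rewrite !mxE !ler_norml => /andP [? ?] /andP [? ?] ?; lra.
Qed.

Theorem proposition4p3 (R : realFieldType) (dx dv nV nI : nat)
  (A : 'M[R]_dx) (C : 'M[R]_(dx, dv)) (w : 'cV[R]_dx)
  (cV : 'cV[R]_dv) (GV : 'M[R]_(dv, nV))
  (xlo xhi : 'cV[R]_dx) (T : nat)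
  (GI : 'M[R]_(dx, nI)) (alpha : 'cV[R]_dx) (gamma : 'cV[R]_nI)
  (hgamma : forall i, 0 <= gamma i 0) :
  (forall t : nat, (t <= T)%N ->
     vle xlo (A ^+ t *m alpha
              + \sum_(s < t) A ^+ (t.-1 - s) *m (C *m cV + w)
              - mabs (A ^+ t *m GI) *m gamma
              - \sum_(s < t) mabs (A ^+ (t.-1 - s) *m C *m GV) *m ones R nV)
     /\
     vle (A ^+ t *m alpha
              + \sum_(s < t) A ^+ (t.-1 - s) *m (C *m cV + w)
              + mabs (A ^+ t *m GI) *m gamma
              + \sum_(s < t) mabs (A ^+ (t.-1 - s) *m C *m GV) *m ones R nV) xhi) ->
  forall x : 'cV[R]_dx,
    zonotope alpha (GI *m diag_mx gamma^T) x ->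
    Inv A C w (zonotope cV GV) (box xlo xhi) T x.
Proof.
move=> H x [lam [hlam ->]].
have hu : forall j, `|(diag_mx gamma^T *m lam) j 0| <= gamma j 0.
  move=> j; rewrite mul_diag_mx !mxE normrM ger0_norm // ler_piMr //.
  by case/andP: (hlam j) => h1 h2; rewrite ler_norml h1 h2.
have main : forall (mu : nat -> 'cV[R]_nV), (forall s j, `|mu s j 0| <= 1) ->
  forall t, (t <= T)%N ->
  box xlo xhi (A ^+ t *m (alpha + GI *m diag_mx gamma^T *m lam)
     + \sum_(s < t) A ^+ (t.-1 - s) *m (C *m (cV + GV *m mu s) + w)).
  move=> mu hmu t ht; have [Hl Hh] := H t ht.
  set m := A ^+ t *m alpha + \sum_(s < t) A ^+ (t.-1 - s) *m (C *m cV + w).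
  set e := (A ^+ t *m GI) *m (diag_mx gamma^T *m lam).
  set f := \sum_(s < t) (A ^+ (t.-1 - s) *m C *m GV) *m mu s.
  have -> : A ^+ t *m (alpha + GI *m diag_mx gamma^T *m lam)
     + \sum_(s < t) A ^+ (t.-1 - s) *m (C *m (cV + GV *m mu s) + w) = m + e + f.
    rewrite /m /e /f mulmxDr -!mulmxA -!addrA; congr (_ + _).
    rewrite addrCA; congr (_ + _); rewrite -big_split /=; apply: eq_bigr => s _.
    by rewrite !mulmxDr !mulmxA addrAC.
  have he i := @bound_mul R _ _ (A ^+ t *m GI) _ _ i hu.
  have hf i := @bound_sum R _ _ t (fun s => A ^+ (t.-1 - s) *m C *m GV) mu i hmu.
  exact: final_box he hf Hl Hh.
split.
  have := main (fun _ => 0) _ 0 (leq0n T).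
  rewrite expr0 mul1mx big_ord0 addr0; by apply => s j; rewrite mxE normr0 ler01.
move=> v hv t ht.
pose mu s := proj1_sig (constructive_indefinite_description _ (hv s)).
have hmu s : (forall j, -1 <= mu s j 0 <= 1) /\ v s = cV + GV *m mu s.
  exact: (proj2_sig (constructive_indefinite_description _ (hv s))).
rewrite traj_closed.
have -> : \sum_(s < t) A ^+ (t.-1 - s) *m (C *m v s + w) =
  \sum_(s < t) A ^+ (t.-1 - s) *m (C *m (cV + GV *m mu s) + w).
  by apply: eq_bigr => s _; rewrite -(proj2 (hmu s)).
apply: main ht => s j; rewrite ler_norml; exact: (proj1 (hmu s) j).
Qed.
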